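(* Let $\mu>0$ and $\rho>0$ and $s\in\mathbb{R}^m$ be fixed. Then (1) $F(\cdot,s;\mu,\rho)$ is twice differentiable with respect to $x$, and $$\nabla_xF(x,s;\mu,\rho)=\nabla f(x)-\rho\nabla c(x)y,\qquad \nabla_x^2F(x,s;\mu,\rho)=\Big(\nabla^2 f(x)-\rho\sum_{i=1}^m y_i\nabla^2 c_i(x)\Big)+\rho\sum_{i=1}^m\frac{y_i}{z_i+y_i}\nabla c_i(x)\nabla c_i(x)^T,$$ where $y=y(x,s;\mu,\rho)$, $z=z(x,s;\mu,\rho)$; (2) if $f$ and $-c_i$ ($i=1,\dots,m$) are convex on $\mathbb{R}^n$, then $F(\cdot,s;\mu,\rho)$ is convex on $\mathbb{R}^n$.
   Context: Let $f:\mathbb{R}^n\to\mathbb{R}$ and $c=(c_1,\dots,c_m):\mathbb{R}^n\to\mathbb{R}^m$ be twice continuously differentiable; $\nabla c(x)\in\mathbb{R}^{n\times m}$ denotes the matrix whose $i$-th column is $\nabla c_i(x)$. For parameters $\mu>0$, $\rho>0$ and variables $x\in\mathbb{R}^n$, $s\in\mathbb{R}^m$, define for $i=1,\dots,m$: $z_i(x,s;\mu,\rho)=\frac{1}{2\rho}\big(\sqrt{(s_i-\rho c_i(x))^2+4\rho\mu}-(s_i-\rho c_i(x))\big)$, $y_i(x,s;\mu,\rho)=\frac{1}{2\rho}\big(\sqrt{(s_i-\rho c_i(x))^2+4\rho\mu}+(s_i-\rho c_i(x))\big)$, $h_i(x,s;\mu,\rho)=-\mu\ln z_i(x,s;\mu,\rho)+\frac{\rho}{2}y_i(x,s;\mu,\rho)^2-\frac{1}{2\rho}s_i^2$,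 and the augmented Lagrangian $F(x,s;\mu,\rho)=f(x)+\sum_{i=1}^m h_i(x,s;\mu,\rho)$. We abbreviate $z_i,y_i$ when arguments are clear, and write $z=(z_i)$, $y=(y_i)$, $Z=\mathrm{diag}(z)$, $Y=\mathrm{diag}(y)$. *)

(* Defs.v *)
From HB Require Import structures.
From mathcomp Require Import all_boot all_order all_algebra.
From mathcomp Require Import all_classical all_reals all_analysis.
Set Implicit Arguments. Unset Strict Implicit. Unset Printing Implicit Defensive.
Import Order.TTheory GRing.Theory Num.Theory.
Import numFieldNormedType.Exports.
Local Open Scope ring_scope.

Definition grad (R : realType) (n : nat) (g : 'cV[R]_n -> R) (x : 'cV[R]_n)
  : 'cV[R]_n := \col_(i < n) ('d g x (delta_mx i 0)).

Definition hess (R : realType) (n : nat) (g : 'cV[R]_n -> R) (x : 'cV[R]_n)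
  : 'M[R]_n := \matrix_(i < n, j < n) ('d (grad g) x (delta_mx j 0) i 0).

Definition C2 (R : realType) (n : nat) (g : 'cV[R]_n -> R) : Prop :=
  (forall x, differentiable g x) /\ (forall x, differentiable (grad g) x) /\
  continuous (hess g).

(* nabla c(x) : the n x m matrix whose i-th column is grad c_i(x) *)
Definition jacT (R : realType) (n m : nat) (c : 'I_m -> 'cV[R]_n -> R)
  (x : 'cV[R]_n) : 'M[R]_(n, m) := \matrix_(k < n, i < m) grad (c i) x k 0.

Section AL.
Variables (R : realType) (n m : nat) (f : 'cV[R]_n -> R)
  (c : 'I_m -> 'cV[R]_n -> R) (s : 'cV[R]_m) (mu rho : R).

Definition zf (x : 'cV[R]_n) (i : 'I_m) : R :=
  (2 * rho)^-1 * (Num.sqrt ((s i 0 - rho * c i x) ^+ 2 + 4 * rho * mu)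
                  - (s i 0 - rho * c i x)).

Definition yf (x : 'cV[R]_n) (i : 'I_m) : R :=
  (2 * rho)^-1 * (Num.sqrt ((s i 0 - rho * c i x) ^+ 2 + 4 * rho * mu)
                  + (s i 0 - rho * c i x)).

Definition hf (x : 'cV[R]_n) (i : 'I_m) : R :=
  - mu * ln (zf x i) + rho / 2 * (yf x i) ^+ 2 - (2 * rho)^-1 * (s i 0) ^+ 2.

Definition ALF (x : 'cV[R]_n) : R := f x + \sum_(i < m) hf x i.

Definition yvec (x : 'cV[R]_n) : 'cV[R]_m := \col_(i < m) yf x i.
End AL.

(* Main.v *)
Require Import Defs.
From HB Require Import structures.
From mathcomp Require Import all_boot all_order all_algebra.
From mathcomp Require Import all_classical all_reals all_analysis.
From mathcomp Require Import ring lra.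
Import Order.TTheory GRing.Theory Num.Theory.
Import numFieldNormedType.Exports.
Local Open Scope classical_set_scope.
Local Open Scope ring_scope.
Local Open Scope convex_scope.
Section Real.
Variables (R : realType) (mu rho si : R).
Hypotheses (mu0 : 0 < mu) (rho0 : 0 < rho).
Definition Wt (t : R) := si - rho * t.
Definition Qt (t : R) := Wt t ^+ 2 + 4 * rho * mu.
Definition St t := Num.sqrt (Wt t ^+ 2 + 4 * rho * mu).
Definition Yt t := (2*rho)^-1 * (St t + Wt t).
Definition Zt t := (2*rho)^-1 * (St t - Wt t).
Definition Ht t := - mu * ln (Zt t) + rho / 2 * (Yt t) ^+ 2 - (2 * rho)^-1 * si ^+ 2.

Lemma Qgt0 t : 0 < Qt t.
Proof. rewrite /Qt; have := sqr_ge0 (Wt t); have h3 : 0 < rho * mu by apply: mulr_gt0. lra. Qed.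
Lemma Sgt0 t : 0 < St t.
Proof. by rewrite sqrtr_gt0; apply: Qgt0. Qed.
Lemma S2 t : St t ^+ 2 = Wt t ^+ 2 + 4 * rho * mu.
Proof. by rewrite sqr_sqrtr // ltW // (Qgt0 t). Qed.
Lemma WltS t : Wt t < St t /\ - Wt t < St t.
Proof.
have h : `|Wt t| < St t.
  rewrite /St -sqrtr_sqr ltr_sqrt; last exact: Qgt0.
  have h3 : 0 < rho * mu by apply: mulr_gt0.
  lra.
by move/ltr_normlP: h => [].
Qed.
Lemma Zgt0 t : 0 < Zt t.
Proof. rewrite /Zt; have [h _] := WltS t; apply: mulr_gt0; [by rewrite invr_gt0 mulr_gt0 | lra]. Qed.
Lemma Ygt0 t : 0 < Yt t.
Proof. rewrite /Yt; have [_ h] := WltS t; apply: mulr_gt0; [by rewrite invr_gt0 mulr_gt0 | lra]. Qed.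
Lemma YZ t : rho * Yt t * Zt t = mu.
Proof.
rewrite /Yt /Zt; have h := S2 t. have hr : rho != 0 by rewrite gt_eqF.
have e : (St t - Wt t) * (St t + Wt t) = 4 * rho * mu by rewrite -subr_sqr h; ring.
transitivity (rho * (2*rho)^-1 * (2*rho)^-1 * ((St t - Wt t) * (St t + Wt t))); first ring.
rewrite e; field; exact hr.
Qed.
Lemma WYZ t : Wt t = rho * (Yt t - Zt t).
Proof. rewrite /Yt /Zt; field; by rewrite gt_eqF. Qed.
Lemma SYZ t : St t = rho * (Zt t + Yt t).
Proof. rewrite /Yt /Zt; field; by rewrite gt_eqF. Qed.

Lemma dQ (t : R) : is_derive t (1:R) Qt (- 2 * rho * Wt t).
Proof. rewrite /Qt /Wt. apply: is_derive_eq. rewrite /GRing.scale /=. ring. Qed.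

Lemma dW (t : R) : is_derive t (1:R) Wt (- rho).
Proof. rewrite /Wt. apply: is_derive_eq. rewrite /GRing.scale /=. ring. Qed.
Local Instance dW_i t : is_derive t (1:R) Wt (- rho) := dW t.

Lemma dS (t : R) : is_derive t (1:R) St (- rho * Wt t / St t).
Proof.
have h := is_derive1_comp (is_derive1_sqrt (Qgt0 t)) (dQ t).
apply: is_derive_eq.
have h2 := Sgt0 t. rewrite -/(St t).
by field; rewrite gt_eqF.
Qed.
Local Instance dS_i t : is_derive t (1:R) St (- rho * Wt t / St t) := dS t.

Lemma dY (t : R) : is_derive t (1:R) Yt (- (Yt t / (Zt t + Yt t))).
Proof.
rewrite /Yt. apply: is_derive_eq.
have e : Zt t + (2 * rho)^-1 * (St t + Wt t) = St t / rho.
  by rewrite /Zt; field; rewrite gt_eqF.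
rewrite e /GRing.scale /=; have h2 := Sgt0 t; field; rewrite !gt_eqF //.
Qed.
Local Instance dY_i t : is_derive t (1:R) Yt (- (Yt t / (Zt t + Yt t))) := dY t.

Lemma dZ (t : R) : is_derive t (1:R) Zt (rho * Zt t / St t).
Proof.
rewrite /Zt. apply: is_derive_eq. rewrite -/(Zt t).
rewrite /Zt /GRing.scale /=; have h2 := Sgt0 t; field; rewrite !gt_eqF //.
Qed.
Local Instance dZ_i t : is_derive t (1:R) Zt (rho * Zt t / St t) := dZ t.

Lemma dlnZ (t : R) : is_derive t (1:R) (fun t => ln (Zt t)) (rho / St t).
Proof.
have h := is_derive1_comp (is_derive1_ln (Zgt0 t)) (dZ t).
apply: is_derive_eq.
have := Zgt0 t; have := Sgt0 t => h1 h2; field; rewrite !gt_eqF //.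
Qed.
Local Instance dlnZ_i t : is_derive t (1:R) (fun t => ln (Zt t)) (rho / St t) := dlnZ t.

Lemma dH (t : R) : is_derive t (1:R) Ht (- rho * Yt t).
Proof.
rewrite /Ht. apply: is_derive_eq. rewrite /GRing.scale /=.
have hz := Zgt0 t; have hy := Ygt0 t.
rewrite SYZ -{1}(YZ t); field.
by rewrite !gt_eqF // addr_gt0.
Qed.


Lemma ln_le_sub1 (x : R) : 0 < x -> ln x <= x - 1.
Proof.
move=> x0; have := @le_ln1Dx R (x - 1). rewrite subrKC; apply; lra.
Qed.

Lemma H_tangent a b : Ht a + (- rho * Yt a) * (b - a) <= Ht b.
Proof.
have za := Zgt0 a; have zb := Zgt0 b; have ya := Ygt0 a; have yb := Ygt0 b.
have hl : ln (Zt b) - ln (Zt a) <= Zt b / Zt a - 1.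
  rewrite -ln_div ?posrE //; apply: ln_le_sub1; exact: divr_gt0.
have hw : - rho * (b - a) = Wt b - Wt a by rewrite /Wt; ring.
have e1 : mu * (Zt b / Zt a) = rho * Yt a * Zt b.
  by rewrite -(YZ a); field; rewrite gt_eqF.
have hm : mu * (ln (Zt b) - ln (Zt a)) <= mu * (Zt b / Zt a - 1).
  by rewrite ler_pM2l.
rewrite /Ht.
have key : (- rho * Yt a) * (b - a) = Yt a * (Wt b - Wt a) by rewrite -hw; ring.
rewrite key WYZ (WYZ a).
have ea := YZ a.
have hsq : 0 <= rho / 2 * (Yt a - Yt b) ^+ 2 by apply: mulr_ge0; [apply: divr_ge0; [exact: ltW | by []] | exact: sqr_ge0].
have hm' : mu * ln (Zt b) - mu * ln (Zt a) <= rho * Yt a * Zt b - rho * Yt a * Zt a.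
  by rewrite -mulrBr -e1 ea -{3}[mu]mulr1 -mulrBr.
nra.
Qed.

Lemma H_anti a b : a <= b -> Ht b <= Ht a.
Proof.
move=> ab; have := H_tangent b a; have yb := Ygt0 b.
have : 0 <= rho * Yt b * (b - a) by apply: mulr_ge0; [apply: mulr_ge0; exact: ltW | lra].
nra.
Qed.

Lemma H_conv a b l : 0 <= l -> l <= 1 ->
  Ht (l * a + (1 - l) * b) <= l * Ht a + (1 - l) * Ht b.
Proof.
move=> l0 l1; set p := l * a + (1 - l) * b.
have t1 := H_tangent p a; have t2 := H_tangent p b.
have e : l * (a - p) + (1 - l) * (b - p) = 0 by rewrite /p; ring.
have u1 : l * (Ht p + (- rho * Yt p) * (a - p)) <= l * Ht a by rewrite ler_wpM2l.
have u2 : (1 - l) * (Ht p + (- rho * Yt p) * (b - p)) <= (1 - l) * Ht b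
  by rewrite ler_wpM2l // subr_ge0.
have e2 : l * (Ht p + (- rho * Yt p) * (a - p)) + (1 - l) * (Ht p + (- rho * Yt p) * (b - p))
  = Ht p + (- rho * Yt p) * (l * (a - p) + (1 - l) * (b - p)) by ring.
rewrite e mulr0 addr0 in e2. lra.
Qed.

Lemma dA (t : R) : is_derive t (1:R) (fun t => - rho * Yt t) (rho * (Yt t / (Zt t + Yt t))).
Proof. apply: is_derive_eq. rewrite /GRing.scale /=. ring. Qed.
End Real.
Section Multi.
Variables (R : realType) (n : nat).
Local Notation V := 'cV[R]_n.

Lemma comp_diff (g : V -> R) (H : R -> R) (d : R) x :
  differentiable g x -> is_derive (g x) (1:R) H d ->
  differentiable (fun y => H (g y)) x /\
  'd (fun y => H (g y)) x = (fun v => 'd g x v * d) :> (V -> R).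
Proof.
move=> dg dH.
have dH' : differentiable H (g x) by apply/derivable1_diffP; case: dH.
split; first exact: (differentiable_comp dg dH').
rewrite (diff_comp dg dH') deriv1E; last by case: dH.
apply/funext => v /=. rewrite derive1E derive_val. by [].
Qed.

Lemma sum_diff m (W : normedModType R) (g : 'I_m -> V -> W) x :
  (forall i, differentiable (g i) x) ->
  differentiable (fun y => \sum_i g i y) x /\
  'd (fun y => \sum_i g i y) x = (fun v => \sum_i 'd (g i) x v) :> (V -> W).
Proof.
move=> dg.
have h : is_diff x (\sum_i g i) (\sum_i ('d (g i) x : V -> W)).
  elim/big_rec2: _ => [|i G D _ IH]; first exact: is_diff_cst.
  apply: is_diffD => //; exact: differentiableP.
rewrite -!fct_sumE; split; [exact: ex_diff | exact: diff_val].
Qed.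

Definition coordf {p} (k : 'I_p) : {linear 'cV[R]_p -> R}.
Proof.
by exists (fun N : 'cV[R]_p => N k 0); do 2![eexists]; do ?[constructor];
     rewrite ?mxE// => ? *; rewrite ?mxE//; move=> ?; rewrite !mxE.
Defined.

Lemma coord_diff p (G : V -> 'cV[R]_p) x k v :
  differentiable G x ->
  differentiable (fun y => G y k 0) x /\ 'd (fun y => G y k 0) x v = 'd G x v k 0.
Proof.
move=> dG.
have hc : continuous (coordf k) by apply: coord_continuous.
have dc : differentiable (coordf k) (G x) by apply: linear_differentiable.
have -> : (fun y => G y k 0) = coordf k \o G by [].
split; first exact: differentiable_comp.
by rewrite diff_comp // diff_lin.
Qed.

Lemma diff_coord p (G : V -> 'cV[R]_p) x :
  (forall k, differentiable (fun y => G y k 0) x) -> differentiable G x.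
Proof.
move=> dk.
have -> : G = (fun y => \sum_(k < p) (G y k 0) *: delta_mx k (0 : 'I_1)).
  apply/funext => y; rewrite {1}[G y]matrix_sum_delta; apply: eq_bigr => k _.
  by rewrite big_ord1.
have [h _] := @sum_diff p _ (fun k y => (G y k 0) *: (delta_mx k (0:'I_1) : 'cV[R]_p)) x
  (fun k => differentiableZl _ (dk k)).
exact: h.
Qed.
End Multi.

Section ConvE.
Local Open Scope convex_scope.
Lemma convE (R : realType) n (x y : convex_lmodType 'cV[R]_n) (t : {i01 R}) :
  x <| t |> y = t%:num *: x + (1 - t%:num) *: y.
Proof. by []. Qed.
Lemma convRE' (R : realType) (x y : R^o) (t : {i01 R}) :
  x <| t |> y = t%:num * x + (1 - t%:num) * y.
Proof. by []. Qed.
End ConvE.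
Theorem lemma2p4 (R : realType) (n m : nat) (f : 'cV[R]_n -> R)
  (c : 'I_m -> 'cV[R]_n -> R) (mu rho : R) (s : 'cV[R]_m) :
  C2 f -> (forall i, C2 (c i)) -> 0 < mu -> 0 < rho ->
  (forall x : 'cV[R]_n,
     differentiable (ALF f c s mu rho) x /\
     differentiable (grad (ALF f c s mu rho)) x /\
     grad (ALF f c s mu rho) x
       = grad f x - rho *: (jacT c x *m yvec c s mu rho x) /\
     hess (ALF f c s mu rho) x
       = (hess f x - rho *: \sum_(i < m) yf c s mu rho x i *: hess (c i) x)
         + rho *: \sum_(i < m)
             (yf c s mu rho x i / (zf c s mu rho x i + yf c s mu rho x i))
               *: (grad (c i) x *m (grad (c i) x)^T)) /\
  (convex_function setT f ->
   (forall i, convex_function setT (fun x => - c i x)) ->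
   convex_function setT (ALF f c s mu rho)).
Proof.
move=> [df [dgf _]] hc mu0 rho0.
pose Hi i := Ht R mu rho (s i 0).
pose Yi i := Yt R mu rho (s i 0).
pose Zi i := Zt R mu rho (s i 0).
have eF : ALF f c s mu rho = fun y => f y + \sum_i Hi i (c i y) by [].
have dci : forall i y, differentiable (c i) y by move=> i y; case: (hc i) => h _; exact: h.
have dgc : forall i y, differentiable (grad (c i)) y by move=> i y; case: (hc i) => _ [h _]; exact: h.
have dHc i y := @comp_diff R n (c i) (Hi i) _ y (dci i y) (@dH R mu rho (s i 0) mu0 rho0 (c i y)).
have dF y : differentiable (ALF f c s mu rho) y /\ forall v,
    'd (ALF f c s mu rho) y v = 'd f y v + \sum_i 'd (c i) y v * (- rho * Yi i (c i y)).
  have [dS eS] := @sum_diff R n m _ (fun i z => Hi i (c i z)) y (fun i => (dHc i y).1).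
  rewrite eF; split; first exact: (differentiableD (df y) dS).
  move=> v; rewrite (diffD (df y) dS) /= eS; congr (_ + _).
  by apply: eq_bigr => i _; rewrite (dHc i y).2.
pose G := fun y => \col_(k < n) (grad f y k 0 + \sum_i (- rho * Yi i (c i y)) * grad (c i) y k 0).
have eG : grad (ALF f c s mu rho) = G.
  apply/funext => y; apply/matrixP => k l; rewrite /G /grad !mxE (dF y).2; congr (_ + _).
  by apply: eq_bigr => i _; rewrite !mxE mulrC.
have egk k : (fun y => G y k 0) =
    (fun y => grad f y k 0 + \sum_i (- rho * Yi i (c i y)) * grad (c i) y k 0).
  by apply/funext => y; rewrite /G mxE.
have dAc i y := @comp_diff R n (c i) (fun t => - rho * Yt R mu rho (s i 0) t) _ y (dci i y)
   (@dA R mu rho (s i 0) mu0 rho0 (c i y)).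
have dGk y k : differentiable (fun z => G z k 0) y /\ forall v,
    'd (fun z => G z k 0) y v = 'd (grad f) y v k 0 + \sum_i
      ((- rho * Yi i (c i y)) * ('d (grad (c i)) y v k 0) +
       grad (c i) y k 0 * ('d (c i) y v * (rho * (Yi i (c i y) / (Zi i (c i y) + Yi i (c i y)))))).
  rewrite egk.
  have dP i : differentiable (fun z => (- rho * Yi i (c i z)) * grad (c i) z k 0) y.
    exact: (differentiableM (dAc i y).1 (@coord_diff R n n (grad (c i)) y k 0 (dgc i y)).1).
  have [dS eS] := @sum_diff R n m _ (fun i z => (- rho * Yi i (c i z)) * grad (c i) z k 0) y dP.
  have dfk := @coord_diff R n n (grad f) y k.
  split; first exact: (differentiableD (dfk 0 (dgf y)).1 dS).
  move=> v; rewrite (diffD (dfk 0 (dgf y)).1 dS) /= eS (dfk v (dgf y)).2; congr (_ + _).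
  apply: eq_bigr => i _.
  rewrite (diffM (dAc i y).1 (@coord_diff R n n (grad (c i)) y k 0 (dgc i y)).1).
  transitivity ((- rho * Yi i (c i y)) * 'd (fun z => grad (c i) z k 0) y v +
    grad (c i) y k 0 * 'd (fun z => - rho * Yt R mu rho (s i 0) (c i z)) y v); first by [].
  rewrite (dAc i y).2 (@coord_diff R n n (grad (c i)) y k v (dgc i y)).2.
  by [].
have eY i y : yf c s mu rho y i = Yi i (c i y) by [].
have eZ i y : zf c s mu rho y i = Zi i (c i y) by [].
have dG x : differentiable G x by apply: diff_coord => k; exact: (dGk x k).1.
split.
  move=> x; split; first exact: (dF x).1.
  split; first by rewrite eG.
  split.
    apply/matrixP => k l; rewrite !mxE (dF x).2.
    rewrite mulr_sumr -sumrN; congr (_ + _); apply: eq_bigr => i _.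
    rewrite !mxE eY; ring.
  apply/matrixP => k j; rewrite [LHS]mxE eG.
  rewrite -(@coord_diff R n n G x k (delta_mx j 0) (dG x)).2 (dGk x k).2.
  rewrite !(mxE, summxE) !mulr_sumr -sumrN -addrA -big_split; congr (_ + _).
  apply: eq_bigr => i _ /=; rewrite !mxE big_ord1 !mxE eY eZ; ring.
move=> cf cc t x y _ _.
have l0 : 0 <= t%:num by apply: ge0.
have l1 : t%:num <= 1 by apply: le1.
have hf := cf t x y (mem_setT x) (mem_setT y).
rewrite convRE' in hf.
have hi i : Hi i (c i (x <| t |> y)) <=
    t%:num * Hi i (c i x) + (1 - t%:num) * Hi i (c i y).
  have hci := cc i t x y (mem_setT x) (mem_setT y).
  rewrite convRE' in hci.
  have q : t%:num * c i x + (1 - t%:num) * c i y <= c i (x <| t |> y) by lra.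
  apply: le_trans (@H_anti R mu rho (s i 0) mu0 rho0 _ _ q) _.
  exact: H_conv.
have hs : \sum_i Hi i (c i (x <| t |> y)) <=
    t%:num * \sum_i Hi i (c i x) + (1 - t%:num) * \sum_i Hi i (c i y).
  by rewrite !mulr_sumr -big_split; apply: ler_sum => i _; exact: hi.
rewrite convRE' !eF.
lra.
Qed.
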